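(* Let $G$ be a finite group and $\mathcal{P}$ a prime ideal of $\mathrm{Gh}(\underline{A}_G)$ with $\mathcal{P}(G/e)=(p)\subseteq\mathbb{Z}$ for a prime $p$. For $I\le G$ let $p_I\ge0$ be the integer with $\mathcal{P}(G/G)=\widetilde{A}(G)\cap\prod_{I\le G}p_I\mathbb{Z}$, and set $\mathscr{F}(\mathcal{P})=\{I\le G: p_I\ne1\}$. Then $\mathcal{P}=\mathcal{P}_{\mathscr{F}(\mathcal{P}),p}$.
   Context: For $H\le G$, $\widetilde{A}(H)$ is the subring of $\prod_{I\le H}\mathbb{Z}$ of tuples $(a_I)_{I\le H}$ with $a_{hIh^{-1}}=a_I$ for $h\in H$ (so $\widetilde{A}(e)=\mathbb{Z}$). $\mathrm{Gh}(\underline{A}_G)$ is the $G$-Tambara functor with $\mathrm{Gh}(\underline{A}_G)(G/H)=\widetilde{A}(H)$ and, for $H\le K$, $g\in G$, $I^g=g^{-1}Ig$: $\mathrm{res}^K_H(b)_L=b_L$; $\mathrm{tr}^K_H(a)_I=\sum_{kH\in K/H,\ I^k\le H}a_{I^k}$; $\mathrm{nm}^K_H(a)_I=\prod_{IgH\in I\backslash K/H}a_{I^g\cap H}$; $c_{g,H}(a)_J=a_{J^g}$ for $J\le gHg^{-1}$. For a set $\mathscr{F}$ of subgroups closed under conjugation and $p$ a prime or $0$, $\mathcal{P}_{\mathscr{F},p}(G/H)=\widetilde{A}(H)\cap\prod_{I\le H}\delta(I)\mathbb{Z}$ where $\delta(I)=p$ if $I\in\mathscr{F}$ and $1$ otherwise.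 A Tambara ideal is a collection of ideals $\mathcal{I}(G/H)$ closed under all restrictions, transfers, norms and conjugations; it is prime (Nakaoka) if it is not everything and whenever $a\in T(G/K_1)$, $b\in T(G/K_2)$ satisfy $\big(\mathrm{nm}^L_{g_1H_1g_1^{-1}}c_{g_1,H_1}\mathrm{res}^{K_1}_{H_1}(a)\big)\big(\mathrm{nm}^L_{g_2H_2g_2^{-1}}c_{g_2,H_2}\mathrm{res}^{K_2}_{H_2}(b)\big)\in\mathcal{I}(G/L)$ for all $L,H_1,H_2\le G$, $g_1,g_2\in G$ with $H_i\le K_i$, $g_iH_ig_i^{-1}\le L$, then $a\in\mathcal{I}(G/K_1)$ or $b\in\mathcal{I}(G/K_2)$. *)

(* Defs.v *)
From mathcomp Require Import all_boot all_order all_algebra all_fingroup.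
Set Implicit Arguments. Unset Strict Implicit. Unset Printing Implicit Defensive.
Import GRing.Theory Num.Theory.
Local Open Scope ring_scope.

(* The ambient finite group G is the whole group [set: gT].
   An element of Gh(A_G)(G/H) is represented by a function
   a : {group gT} -> int, whose value at I is the coordinate a_I for I <= H,
   and which is 0 at groups not contained in H (canonical representative). *)
Section Ghost.
Variable gT : finGroupType.

Definition gfun := {group gT} -> int.

Definition Atil (H : {group gT}) (a : gfun) : Prop :=
  (forall I : {group gT}, ~~ (I \subset H) -> a I = 0) /\
  (forall I : {group gT}, I \subset H ->
     forall h : gT, h \in H -> a (I :^ h)%G = a I).

Definition gadd (a b : gfun) : gfun := fun I => a I + b I.
Definition gmul (a b : gfun) : gfun := fun I => a I * b I.
Definition gopp (a : gfun) : gfun := fun I => - a I.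
Definition gzero : gfun := fun _ => 0.

(* res^K_H (the source K is irrelevant for the formula). *)
Definition gres (H : {group gT}) (b : gfun) : gfun :=
  fun L => if L \subset H then b L else 0.

Definition gtr (K H : {group gT}) (a : gfun) : gfun :=
  fun I => if I \subset K then
      \sum_(C in lcosets H K | (I :^ repr C)%g \subset H) a (I :^ repr C)%G
    else 0.

Definition gnm (K H : {group gT}) (a : gfun) : gfun :=
  fun I => if I \subset K then
      \prod_(D in [set ((I :* g) * H)%g | g in K])
        a (I :^ repr D :&: H)%G
    else 0.

(* c_{g,H} : T(G/H) -> T(G/gHg^-1), c_{g,H}(a)_J = a_{J^g}; gHg^-1 = H :^ g^-1 *)
Definition gconj (g : gT) (H : {group gT}) (a : gfun) : gfun :=
  fun J => if J \subset (H :^ g^-1)%g then a (J :^ g)%G else 0.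

Definition is_ideal (H : {group gT}) (J : gfun -> Prop) : Prop :=
  [/\ (forall a, J a -> Atil H a),
      J gzero,
      (forall a b, J a -> J b -> J (gadd a b)),
      (forall a, J a -> J (gopp a)) &
      (forall r a, Atil H r -> J a -> J (gmul r a))].

Definition tambara_ideal (I : {group gT} -> gfun -> Prop) : Prop :=
  [/\ (forall H, is_ideal H (I H)),
      (forall H K : {group gT}, H \subset K ->
         forall b, I K b -> I H (gres H b)),
      (forall H K : {group gT}, H \subset K ->
         forall a, I H a -> I K (gtr K H a)),
      (forall H K : {group gT}, H \subset K ->
         forall a, I H a -> I K (gnm K H a)) &
      (forall (g : gT) (H : {group gT}) a, I H a ->
         I (H :^ g^-1)%G (gconj g H a))].

(* Prime Tambara ideal in the sense of Nakaoka. *)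
Definition prime_tambara_ideal (I : {group gT} -> gfun -> Prop) : Prop :=
  [/\ tambara_ideal I,
      (exists (H : {group gT}) a, Atil H a /\ ~ I H a) &
      (forall (K1 K2 : {group gT}) (a b : gfun), Atil K1 a -> Atil K2 b ->
        (forall (L H1 H2 : {group gT}) (g1 g2 : gT),
           H1 \subset K1 -> H2 \subset K2 ->
           (H1 :^ g1^-1)%g \subset L -> (H2 :^ g2^-1)%g \subset L ->
           I L (gmul (gnm L (H1 :^ g1^-1)%G (gconj g1 H1 (gres H1 a)))
                     (gnm L (H2 :^ g2^-1)%G (gconj g2 H2 (gres H2 b))))) ->
        I K1 a \/ I K2 b)].

Definition PFp (F : pred {group gT}) (p : nat) (H : {group gT}) (a : gfun)
  : Prop :=
  Atil H a /\ (forall I : {group gT}, I \subset H -> F I -> (p %| a I)%Z).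

End Ghost.

(* Main.v *)
Require Import Defs.
From mathcomp Require Import all_boot all_order all_algebra all_fingroup.
From mathcomp Require Import ring.
From Stdlib Require Import FunctionalExtensionality.
Set Implicit Arguments. Unset Strict Implicit. Unset Printing Implicit Defensive.
Import GRing.Theory Num.Theory.
Local Open Scope ring_scope.

Lemma PoszX' (p k : nat) : (Posz p) ^+ k = Posz (p ^ k)%N.
Proof. elim: k => [|k IH]; first by rewrite expr0 expn0. by rewrite exprS IH expnS PoszM. Qed.

Section Aux.
Variable gT : finGroupType.

Lemma Atil_ext (H : {group gT}) (f g : gfun gT) :
  (forall J, f J = g J) -> Atil H f -> Atil H g.
Proof.
move=> e [h1 h2]; split=> [I nI|I sIH h hH]; rewrite -!e; [exact: h1| exact: h2].
Qed.

Lemma Atil_mul (H : {group gT}) (x y : gfun gT) :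
  Atil H x -> Atil H y -> Atil H (gmul x y).
Proof.
move=> [x1 x2] [y1 y2]; split=> [I nI|I sI h hH]; rewrite /gmul.
  by rewrite x1 // mul0r.
by rewrite x2 // y2.
Qed.

Lemma Atil_sqrt (H : {group gT}) (f : gfun gT) :
  Atil H (gmul f f) -> (forall J, 0 <= f J) -> Atil H f.
Proof.
move=> [h1 h2] f0; split=> [I nI|I sI h hH].
  by apply/eqP; rewrite -(orbb (f I == 0)) -mulf_eq0; apply/eqP; exact: h1.
by apply/eqP; rewrite -(eqrXn2 (n:=2)) ?f0 // !expr2; apply/eqP; exact: h2.
Qed.

Lemma Atil_gres_const (H : {group gT}) (c : int) : Atil H (gres H (fun _ => c)).
Proof.
split=> [I nI|I sI h hH]; rewrite /gres; first by rewrite (negbTE nI).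
by rewrite sI /= -(conjGid hH) conjSg sI.
Qed.

Lemma ideal_dvd (H : {group gT}) (J : gfun gT -> Prop) (x y : gfun gT) :
  is_ideal H J -> J x -> Atil H y -> (forall K, (x K %| y K)%Z) -> J y.
Proof.
move=> [hA _ _ _ hM] Jx Ay dv.
have [x1 x2] := hA _ Jx; have [y1 y2] := Ay.
pose r : gfun gT := fun K => (y K %/ x K)%Z.
have -> : y = gmul r x.
  by apply: functional_extensionality => K; rewrite /gmul /r divzK.
apply: hM => //; split=> [I nI|I sI h hH]; rewrite /r.
  by rewrite y1 // div0z.
by rewrite x2 // y2.
Qed.

Lemma gres_mul (H : {group gT}) (x y : gfun gT) :
  gres H (gmul x y) = gmul (gres H x) (gres H y).
Proof.
by apply: functional_extensionality => L; rewrite /gres /gmul; case: ifP; rewrite ?mul0r.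
Qed.

Lemma gconj_mul g (H : {group gT}) (x y : gfun gT) :
  gconj g H (gmul x y) = gmul (gconj g H x) (gconj g H y).
Proof.
by apply: functional_extensionality => L; rewrite /gconj /gmul; case: ifP; rewrite ?mul0r.
Qed.

Lemma gnm_mul (K H : {group gT}) (x y : gfun gT) :
  gnm K H (gmul x y) = gmul (gnm K H x) (gnm K H y).
Proof.
apply: functional_extensionality => L; rewrite /gnm /gmul; case: ifP => _; last by rewrite mul0r.
exact: big_split.
Qed.

Lemma nm_const_facts (n : nat) (L H : {group gT}) g (J : {group gT}) :
  let w := gnm L (H :^ g^-1)%G (gconj g H (gres H (fun _ => n%:Z))) in
  [/\ (n%:Z %| w J)%Z, 0 <= w J & (~~ (J \subset L) -> w J = 0)].
Proof.
rewrite /gnm; case: ifP => sJL; split => //.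
- set S := [set _ | _ in _].
  have D0 : (J :* 1 * (H :^ g^-1)%G)%g \in S by apply: imset_f; exact: group1.
  rewrite (bigD1 _ D0) /= dvdz_mulr //.
  rewrite /gconj /gres; case: ifP => _; last exact: dvdz0.
  by case: ifP => _; [exact: dvdzz | exact: dvdz0].
- apply: prodr_ge0 => D _; rewrite /gconj /gres.
  by case: ifP => _ //; case: ifP.
Qed.

End Aux.

Theorem corollary4p11 (gT : finGroupType) (P : {group gT} -> gfun gT -> Prop)
  (p : nat) (pI : {group gT} -> nat) :
  prime_tambara_ideal P ->
  prime p ->
  (forall a, P 1%G a <-> Atil 1%G a /\ (p %| a 1%G)%Z) ->
  (forall a, P [set: gT]%G a <->
     Atil [set: gT]%G a /\ (forall I : {group gT}, (pI I %| a I)%Z)) ->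
  (forall (I : {group gT}) (g : gT), pI (I :^ g)%G = pI I) ->
  forall (H : {group gT}) (a : gfun gT),
    P H a <-> PFp (fun I : {group gT} => pI I != 1%N) p H a.
Proof.
move=> [[Pid Pres Ptr Pnm Pcj] _ Pprime] pr_p P1 PG pIc.
have AtT : forall c : int, Atil [set: gT]%G (fun _ => c).
  by move=> c; split=> [I /negP []|//]; exact: subsetT.
have PGc : forall n : nat, P [set: gT]%G (fun _ => n%:Z) <-> forall I, (pI I %| n)%N.
  by move=> n; rewrite PG; split=> [[_ h] I|h]; [exact: h | split].
have stepN : forall I, (pI I %| p ^ #|gT|)%N.
  pose x1 : gfun gT := fun J => if J \subset 1%G then p%:Z else 0.
  have Px1 : P 1%G x1.
    apply/P1; split; last by rewrite /x1 subxx dvdzz.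
    split=> [J nJ|J sJ h hh]; rewrite /x1; first by rewrite (negbTE nJ).
    by rewrite sJ /= -(conjs1g h) conjSg sJ.
  have := Pnm _ _ (sub1G [set: gT]%G) _ Px1.
  move/PG => [_ h] I; move: (h I).
  rewrite /gnm subsetT (eq_bigr (fun _ => p%:Z)); last first.
    by move=> D _; rewrite /x1 subsetIr.
  rewrite prodr_const PoszX' => /= dv.
  apply: dvdn_trans dv _; apply: dvdn_exp2l.
  by rewrite -cardsT; apply: leq_imset_card.
have stepS : forall n : nat, P [set: gT]%G (fun _ => (n * n)%N%:Z) ->
    P [set: gT]%G (fun _ => n%:Z).
  move=> n Pnn.
  have [] := Pprime _ _ _ _ (AtT n%:Z) (AtT n%:Z) => //.
  move=> L H1 H2 g1 g2 _ _ sL1 sL2.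
  set u := gnm L _ (gconj g1 H1 _); set v := gnm L _ (gconj g2 H2 _).
  have Psq : forall (H : {group gT}) g, (H :^ g^-1)%g \subset L ->
      P L (gmul (gnm L (H :^ g^-1)%G (gconj g H (gres H (fun _ => n%:Z))))
                (gnm L (H :^ g^-1)%G (gconj g H (gres H (fun _ => n%:Z))))).
    move=> H g sHL; rewrite -gnm_mul -gconj_mul -gres_mul.
    have -> : gmul (fun _ : {group gT} => n%:Z) (fun _ => n%:Z) = fun _ => (n * n)%N%:Z.
      by apply: functional_extensionality => J; rewrite /gmul PoszM.
    apply: Pnm => //; apply: Pcj; exact: (Pres _ _ (subsetT H) _ Pnn).
  have [Au _ _ _ _] := Pid L; have Auu := Au _ (Psq _ _ sL1); have Avv := Au _ (Psq _ _ sL2).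
  have Auv : Atil L (gmul u v).
    apply: Atil_sqrt.
      apply: Atil_ext (Atil_mul Auu Avv) => J; rewrite /gmul; exact: mulrACA.
    move=> J; have [_ u0 _] := nm_const_facts n L H1 g1 J.
    have [_ v0 _] := nm_const_facts n L H2 g2 J.
    by rewrite /gmul mulr_ge0.
  apply: (ideal_dvd (Pid L) (x := gres L (fun _ => (n * n)%N%:Z))) => //.
    exact: (Pres _ _ (subsetT L) _ Pnn).
  move=> J; rewrite /gres /gmul; case: ifP => sJ.
    have [du _ _] := nm_const_facts n L H1 g1 J.
    have [dv _ _] := nm_const_facts n L H2 g2 J.
    by rewrite PoszM; apply: dvdz_mul.
  have [_ _ e] := nm_const_facts n L H1 g1 J.
  by rewrite /u e ?sJ // mul0r dvdz0.
have iter : forall k, P [set: gT]%G (fun _ => (p ^ (2 ^ k))%N%:Z) ->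
    P [set: gT]%G (fun _ => p%:Z).
  elim=> [|k IH] h; first by rewrite expn0 expn1 in h.
  apply: IH; apply: stepS; by rewrite -expnD addnn -mul2n -expnS.
have pdiv : forall I, (pI I %| p)%N.
  apply/PGc; apply: (iter #|gT|); apply/PGc => I.
  apply: dvdn_trans (stepN I) _; apply: dvdn_exp2l.
  by apply: ltnW; apply: ltn_expl.
have pIp : forall I, pI I != 1%N -> pI I = p.
  move=> I nI; case/primeP: pr_p => _ /(_ _ (pdiv I)) /pred2P [] //.
  by move=> e; rewrite e in nI.
have PpT : P [set: gT]%G (fun _ => p%:Z) by apply/PGc.
move=> H a; split; last first.
  move=> [AHa Fa].
  pose xF : gfun gT := fun J => ((if pI J != 1%N then p else 1%N)%N)%:Z.
  have PxF : P [set: gT]%G xF.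
    apply/PG; split.
      split=> [I /negP []|I _ h _]; first exact: subsetT.
      by rewrite /xF pIc.
    move=> I; rewrite /xF; case: ifP => nI; first by rewrite (pIp _ nI) dvdzz.
    by move/negbFE/eqP: nI => ->.
  apply: (ideal_dvd (Pid H) (Pres _ _ (subsetT H) _ PxF)) => // J.
  rewrite /gres; case: ifP => sJ; last by rewrite AHa.1 ?sJ // dvdz0.
  rewrite /xF; case: ifP => nJ; first exact: Fa.
  exact: dvd1z.
move=> PHa; have [Ai _ Ad _ Mi] := Pid H; have AHa := Ai _ PHa.
split=> // I sIH nI; apply/negPn/negP => ndiv.
have [s [t e]] := Bezoutz p%:Z (a I).
have g1 : gcdz p%:Z (a I) = 1.
  have cp : coprime p `|a I| by rewrite prime_coprime //; apply/negP.
  by rewrite /gcdz /= (eqP cp).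
rewrite g1 in e.
pose x := gadd (gmul (gres H (fun _ => t)) a)
               (gmul (gres H (fun _ => s)) (gres H (fun _ => p%:Z))).
have PpH := Pres _ _ (subsetT H) _ PpT.
have Px : P H x := Ad _ _ (Mi _ _ (Atil_gres_const H t) PHa)
                          (Mi _ _ (Atil_gres_const H s) PpH).
pose z := gres I x.
have Pz : P I z := Pres _ _ sIH _ Px.
have zI : z I = 1.
  by rewrite /z /gres subxx /x /gadd /gmul /gres sIH -e addrC.
have sIN := normG I.
pose w := gnm 'N(I)%G I z.
have Pw : P 'N(I)%G w := Pnm _ _ sIN _ Pz.
have wI : w I = 1.
  rewrite /w /gnm sIN big1 // => D /imsetP [g gN ->].
  set r := repr _.
  have rN : r \in 'N(I)%g.
    have : r \in (I :* g * I)%g.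
      apply: (mem_repr (g * 1)%g); exact: mem_mulg (rcoset_refl I g) (group1 I).
    case/mulsgP => y i2 /rcosetP [i1 i1I ->] i2I ->.
    by rewrite !groupM // (subsetP sIN).
  have -> : (I :^ r :&: I)%G = I by apply/val_inj; rewrite /= (normP rN) setIid.
  exact: zI.
pose d : gfun gT := fun J => if J == I then 1 else 0.
have Adn : Atil 'N(I)%G d.
  split=> [J nJ|J sJ h hN]; rewrite /d.
    by case: eqP => // eJ; rewrite eJ sIN in nJ.
  have -> : ((J :^ h)%G == I) = (J == I); last by [].
  apply/eqP/eqP => [eJ|->].
    apply/val_inj => /=; rewrite -(conjsgK h J).
    have /= -> := congr1 val eJ.
    by apply/normP; rewrite groupV.
  by apply/val_inj; exact/normP.
have [_ _ _ _ MiN] := Pid 'N(I)%G.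
have Pw' := MiN _ _ Adn Pw.
have Ptt := Ptr _ _ (subsetT 'N(I)%G) _ Pw'.
have [_ hT] := (PG _).1 Ptt.
have ttI : gtr [set: gT]%G 'N(I)%G (gmul d w) I = 1.
  rewrite /gtr subsetT (bigD1 (gval 'N(I)%G)) /=; last first.
    rewrite repr_group conjsg1 sIN andbT; apply/lcosetsP; exists 1%g.
      by rewrite inE.
    by rewrite lcoset1.
  rewrite big1 ?addr0.
    have -> : (I :^ repr 'N(I)%g)%G = I by apply/val_inj; rewrite /= repr_group conjsg1.
    by rewrite /gmul /d eqxx mul1r wI.
  move=> C /andP [/andP [Cl _] nC]; rewrite /gmul /d; case: eqP => [eC|]; last by rewrite mul0r.
  exfalso; move/negP: nC; apply; apply/eqP.
  have rN : repr C \in 'N(I)%g by apply/normP; have /= := congr1 val eC.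
  case/lcosetsP: Cl => y _ Cy.
  have rC : repr C \in (y *: 'N(I)%g)%g by rewrite -Cy; apply: (mem_repr y); rewrite Cy; exact: lcoset_refl.
  rewrite mem_lcoset groupMr // groupV in rC.
  by rewrite Cy lcoset_id.
have := hT I; rewrite ttI => h1.
by move/eqP: nI; apply; apply/eqP; rewrite -dvdn1.
Qed.
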